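(* Let $\nu>0$, let $K$ be a smooth positive function with antiderivative $J(u)=\int K(u)\,du$ assumed invertible, and let $B\neq 0$, $D\neq 0$, $Q$ be constants. Suppose $C(u)=D\,K(u)\exp\!\left(\frac{1}{B}J(u)\right)$. Then, on any region of $z>0$, $t>0$ where $Q+\frac{2(1-\nu)}{D}t>0$ and the argument below lies in the range of $J$, $$u(z,t)=J^{-1}\!\left(-2B\ln z+B\ln\left(Q+\frac{2(1-\nu)}{D}t\right)\right)$$ is a solution of $C(u)u_t=z^{-\nu}\left(K(u)z^{\nu}u_z\right)_z$. *)

(* Defs.v *)
From Stdlib Require Import Reals.
From Coquelicot Require Import Coquelicot.
Open Scope R_scope.

Definition arg8 (nu B D Q z t : R) : R :=
  -2 * B * ln z + B * ln (Q + 2 * (1 - nu) / D * t).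

Definition u8 (Jinv : R -> R) (nu B D Q z t : R) : R :=
  Jinv (arg8 nu B D Q z t).

Definition C8 (K J : R -> R) (B D : R) (u : R) : R :=
  D * K u * exp (J u / B).

Definition flux8 (K : R -> R) (u : R -> R -> R) (nu t : R) (y : R) : R :=
  K (u y t) * Rpower y nu * Derive (fun y' => u y' t) y.

(* Main.v *)
Require Import Defs.
From Stdlib Require Import Reals.
From Coquelicot Require Import Coquelicot.
From Stdlib Require Import Lra Ranalysis5.
Open Scope R_scope.

Lemma Jinv_deriv (K J Jinv : R -> R)
  (HKpos : forall x, 0 < K x)
  (HJ : forall x, is_derive J x (K x))
  (HJinv_l : forall x, Jinv (J x) = x) (x0 : R) :
  is_derive Jinv (J x0) (/ K x0).
Proof.
  pose (prJ := fun x => ex_derive_Reals_0 J x (ex_intro _ _ (HJ x))).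
  assert (Hd : forall x pr, derive_pt J x pr = K x).
  { intros x pr. apply derive_pt_eq_0. apply is_derive_Reals. apply HJ. }
  assert (Jincr : forall a b, a < b -> J a < J b).
  { intros a b Hab. apply (derive_increasing_interv (a-1) (b+1) J prJ); try lra.
    intros s _. rewrite Hd. apply HKpos. }
  assert (Jcont : forall x, continuity_pt J x).
  { intro x. apply derivable_continuous_pt. apply prJ. }
  set (lb := x0 - 1). set (ub := x0 + 1).
  assert (Hlu : lb < ub) by (unfold lb, ub; lra).
  assert (Hsurj : forall y, J lb <= y <= J ub -> J (Jinv y) = y /\ lb <= Jinv y <= ub).
  { intros y Hy. destruct (f_interv_is_interv J lb ub y Hlu Hy (fun x _ => Jcont x)) as [x [Hx Hxy]].
    subst y. rewrite HJinv_l. split; auto. }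
  assert (Hc : continuity_pt Jinv (J x0)).
  { apply (continuity_pt_recip_interv J Jinv lb ub Hlu).
    - intros a b _ Hab _. apply Jincr; auto.
    - intros y H1 H2. unfold comp, id. apply Hsurj; lra.
    - intros y H1 H2. unfold comp, id. apply Hsurj; lra.
    - intros a _. apply Jcont.
    - split; apply Jincr; unfold lb, ub; lra. }
  assert (Hi : Jinv (J lb) <= Jinv (J x0) <= Jinv (J ub)).
  { rewrite !HJinv_l. unfold lb, ub; lra. }
  assert (Hin : J lb < J x0 < J ub) by (split; apply Jincr; unfold lb, ub; lra).
  pose proof (derivable_pt_lim_recip_interv J Jinv (J lb) (J ub) (J x0)
     (fun a _ => prJ a) Hc (Jincr _ _ Hlu) Hin Hi) as H.
  rewrite Hd in H. rewrite HJinv_l in H.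
  apply is_derive_Reals. replace (/ K x0) with (1 / K x0) by (field; apply Rgt_not_eq, HKpos).
  apply H.
  - intros y Hy. unfold comp, id. apply Hsurj. lra.
  - apply Rgt_not_eq, HKpos.
Qed.

Lemma J_incr (K J : R -> R)
  (HKpos : forall x, 0 < K x)
  (HJ : forall x, is_derive J x (K x)) :
  forall a b, a < b -> J a < J b.
Proof.
  pose (prJ := fun x => ex_derive_Reals_0 J x (ex_intro _ _ (HJ x))).
  assert (Hd : forall x pr, derive_pt J x pr = K x).
  { intros x pr. apply derive_pt_eq_0. apply is_derive_Reals. apply HJ. }
  intros a b Hab. apply (derive_increasing_interv (a-1) (b+1) J prJ); try lra.
  intros s _. rewrite Hd. apply HKpos.
Qed.

Lemma J_range (K J : R -> R)
  (HJ : forall x, is_derive J x (K x)) (x0 y : R) :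
  J (x0 - 1) <= y <= J (x0 + 1) -> exists x, J x = y.
Proof.
  intros Hy.
  assert (Jcont : forall x, continuity_pt J x).
  { intro x. apply derivable_continuous_pt. apply (ex_derive_Reals_0 J x (ex_intro _ _ (HJ x))). }
  destruct (f_interv_is_interv J (x0-1) (x0+1) y ltac:(lra) Hy (fun x _ => Jcont x)) as [x [_ Hx]].
  exists x; exact Hx.
Qed.

Lemma Jinv_deriv' (K J Jinv : R -> R)
  (HKpos : forall x, 0 < K x)
  (HJ : forall x, is_derive J x (K x))
  (HJinv_l : forall x, Jinv (J x) = x) (y : R) (Hy : exists x, J x = y) :
  is_derive Jinv y (/ K (Jinv y)).
Proof.
  destruct Hy as [x <-]. rewrite HJinv_l. apply Jinv_deriv; auto.
Qed.

Theorem mainTheorem8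
  (nu : R) (K J Jinv : R -> R) (B D Q : R)
  (Hnu : 0 < nu)
  (HKsmooth : forall (n : nat) (x : R), ex_derive_n K n x)
  (HKpos : forall x, 0 < K x)
  (HJ : forall x, is_derive J x (K x))
  (HJinv_l : forall x, Jinv (J x) = x)
  (HJinv_r : forall y, (exists x, J x = y) -> J (Jinv y) = y)
  (HB : B <> 0) (HD : D <> 0)
  (z t : R) (Hz : 0 < z) (Ht : 0 < t)
  (HQ : 0 < Q + 2 * (1 - nu) / D * t)
  (Hrange : exists x, J x = arg8 nu B D Q z t) :
  let u := u8 Jinv nu B D Q in
  ex_derive (fun s => u z s) t /\
  locally z (fun y => ex_derive (fun y' => u y' t) y) /\
  ex_derive (flux8 K u nu t) z /\
  C8 K J B D (u z t) * Derive (fun s => u z s) t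
    = Rpower z (- nu) * Derive (flux8 K u nu t) z.
Proof.
  intros u.
  pose proof Hrange as [x0 Hx0].
  set (c := 2 * (1 - nu) / D) in *.
  set (P := Q + c * t) in *.
  assert (Ht1 : is_derive (fun s => u z s) t
                  (B * (c / P) * / K (u z t))).
  { assert (Hin : is_derive (fun s => arg8 nu B D Q z s) t (B * (c / P))).
    { unfold arg8. fold c. auto_derive. { fold P. lra. } fold P. field. lra. }
    pose proof (Jinv_deriv' K J Jinv HKpos HJ HJinv_l _ Hrange) as Hout.
    exact (is_derive_comp Jinv (fun s => arg8 nu B D Q z s) _ _ _ Hout Hin). }
  assert (Hsp : forall y, 0 < y -> (exists x, J x = arg8 nu B D Q y t) ->
            is_derive (fun y' => u y' t) y (-2 * B / y * / K (u y t))).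
  { intros y Hy Hr.
    assert (Hin : is_derive (fun y' => arg8 nu B D Q y' t) y (-2 * B / y)).
    { unfold arg8. fold c. auto_derive. { fold P. lra. } field. lra. }
    pose proof (Jinv_deriv' K J Jinv HKpos HJ HJinv_l _ Hr) as Hout.
    exact (is_derive_comp Jinv (fun y' => arg8 nu B D Q y' t) _ _ _ Hout Hin). }
  assert (HN : locally z (fun y => 0 < y /\ J (x0 - 1) < arg8 nu B D Q y t < J (x0 + 1))).
  { apply filter_and.
    - apply (open_gt 0 z Hz).
    - assert (Hc : continuity_pt (fun y => arg8 nu B D Q y t) z).
      { apply derivable_continuous_pt. apply ex_derive_Reals_0.
        unfold arg8. auto_derive. fold c. fold P. lra. }
      apply continuity_pt_filterlim in Hc.
      apply (Hc (fun w => J (x0 - 1) < w < J (x0 + 1))). apply (open_and _ _ (open_gt _) (open_lt _)).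
      rewrite <- Hx0. split; apply (J_incr K J HKpos HJ); lra. }
  assert (HN' : locally z (fun y => 0 < y /\ is_derive (fun y' => u y' t) y (-2 * B / y * / K (u y t)))).
  { eapply filter_imp; [|exact HN]. intros y [Hy Ha]. split; auto. apply Hsp; auto.
    apply (J_range K J HJ x0). lra. }
  assert (Hflux : locally z (fun y => -2 * B * Rpower y (nu - 1) = flux8 K u nu t y)).
  { eapply filter_imp; [|exact HN']. intros y [Hy Hd]. unfold flux8.
    replace (Derive _ y) with (-2 * B / y * / K (u y t))
      by (symmetry; apply is_derive_unique; exact Hd).
    replace (Rpower y nu) with (Rpower y ((nu - 1) + 1)) by (f_equal; ring).
    rewrite Rpower_plus, Rpower_1 by auto. field. repeat split; try lra; apply Rgt_not_eq, HKpos. }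
  assert (Hfd : is_derive (flux8 K u nu t) z (-2 * B * ((nu - 1) * Rpower z (nu - 1 - 1)))).
  { apply (is_derive_ext_loc _ _ _ _ Hflux). apply is_derive_scal.
    apply is_derive_Reals. apply derivable_pt_lim_power. auto. }
  split; [eexists; exact Ht1|].
  split.
  { eapply filter_imp; [|exact HN']. intros y [_ Hd]. eexists; exact Hd. }
  split; [eexists; exact Hfd|].
  replace (Derive _ t) with (B * (c / P) * / K (u z t))
    by (symmetry; apply is_derive_unique; exact Ht1).
  replace (Derive _ z) with (-2 * B * ((nu - 1) * Rpower z (nu - 1 - 1)))
    by (symmetry; apply is_derive_unique; exact Hfd).
  unfold C8.
  assert (HJu : J (u z t) = arg8 nu B D Q z t) by (apply HJinv_r; auto).
  rewrite HJu.
  assert (He : exp (arg8 nu B D Q z t / B) = P / (z * z)).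
  { replace (arg8 nu B D Q z t / B) with (ln P - (ln z + ln z)).
    2:{ unfold arg8. fold c. fold P. field. auto. }
    unfold Rminus. rewrite exp_plus, exp_Ropp, exp_plus, !exp_ln by lra.
    field. lra. }
  rewrite He.
  assert (Hp : Rpower z (- nu) * Rpower z (nu - 1 - 1) = / (z * z)).
  { rewrite <- Rpower_plus. replace (- nu + (nu - 1 - 1)) with (- INR 2) by (simpl; ring).
    rewrite Rpower_Ropp, Rpower_pow by auto. simpl. f_equal. ring. }
  replace (Rpower z (- nu) * (-2 * B * ((nu - 1) * Rpower z (nu - 1 - 1))))
    with (-2 * B * (nu - 1) * (Rpower z (- nu) * Rpower z (nu - 1 - 1))) by ring.
  rewrite Hp. unfold c.
  field. repeat split; try lra. apply Rgt_not_eq, HKpos.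
Qed.
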